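(* For each $k\in\mathbb{Z}_{\geq0}$, the set \[ S_k=\left\{F([u]):=\frac{\delta^l(l_u)[1\oplus\cdots\oplus1]}{|(\mathbb{Z}_{k+1})_u|\sqrt{|[u]|}}\ \middle|\ [u]\in [n]^{k+1}/\mathbb{Z}_{k+1}\right\}\subset\big[(\mathbb{C}^n)^{\otimes k}\big]^n \] (which is well defined, i.e. $F([u])$ does not depend on the representative $u$ of the orbit) is an orthonormal basis of the subspace $\delta^l\big((\mathbb{C}^l_{\langle n\rangle})_{k+1}\big)[1\oplus\cdots\oplus1]$ of $\mathcal{F}(\mathbb{C}^n)^n$.
   Context: Let $n\geq1$, $\{e_1,\dots,e_n\}$ an orthonormal basis of $\mathbb{C}^n$, $\{f_1,\dots,f_n\}$ the standard basis of $\mathbb{C}^n$. The full Fock space is $\mathcal{F}(\mathbb{C}^n)=\mathbb{C}1\oplus\bigoplus_{k\geq1}(\mathbb{C}^n)^{\otimes k}$. Let $[n]^k$ be the set of words $i_1\cdots i_k$ of length $k$ over $[n]=\{1,\dots,n\}$, $e_{i_1\cdots i_k}=e_{i_1}\otimes\cdots\otimes e_{i_k}$, $e_\epsilon=1$. Let $l_j$ be the left creation operator $l_je_w=e_{jw}$, and for a word $u=u_1\cdots u_p$ put $l_u=l_{u_1}\cdots l_{u_p}$. Let $\mathbb{C}^l_{\langle n\rangle}$ be the unital algebra generated by $l_1,\dots,l_n$ and $(\mathbb{C}^l_{\langle n\rangle})_{k+1}$ the linear span of the monomials $l_u$, $u\in[n]^{k+1}$. The cyclic gradient $\delta^l:\mathbb{C}^l_{\langle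 n\rangle}\to(\mathbb{C}^l_{\langle n\rangle})^n\cong\mathbb{C}^l_{\langle n\rangle}\otimes\mathbb{C}^n$ is the linear map with $\delta^l(l_{i_1}\cdots l_{i_p})=\sum_{j=1}^p l_{i_{j+1}}\cdots l_{i_p}l_{i_1}\cdots l_{i_{j-1}}\otimes f_{i_j}$. For $(x_1,\dots,x_n)$ a tuple of operators, $(x_1,\dots,x_n)[1\oplus\cdots\oplus1]=(x_11,\dots,x_n1)\in\mathcal{F}(\mathbb{C}^n)^n$; for a subspace $V$ of tuples, $V[1\oplus\cdots\oplus1]$ is the set of such images. The cyclic group $\mathbb{Z}_{k}=\mathbb{Z}/k\mathbb{Z}$ acts on $[n]^{k}$ via the rotation $R(i_1\cdots i_{k-1}i_k)=i_ki_1\cdots i_{k-1}$; $[u]$ denotes the orbit of $u$, $|[u]|$ its cardinality, $(\mathbb{Z}_k)_u=\{g\in\mathbb{Z}_k: gu=u\}$ the stabilizer, and $[n]^k/\mathbb{Z}_k$ the set of orbits. *)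

(* Defs.v *)
From HB Require Import structures.
From mathcomp Require Import all_boot all_order all_algebra.
Set Implicit Arguments. Unset Strict Implicit. Unset Printing Implicit Defensive.
Import Order.TTheory GRing.Theory Num.Theory.
Local Open Scope ring_scope.

(* Scalars: an arbitrary numClosedFieldType C (e.g. the complex numbers);
   conjugation is Num.conj (notation z^* ). *)

(* Words over [n] are sequences of 'I_n; the letter i (0-based) stands for i+1. *)

(* The cyclic gradient of a monomial l_u, as a formal sum of terms
   (l_w, f_i) = l_w (x) f_i:
   delta^l (l_{u_1}..l_{u_p}) = sum_j l_{u_{j+1}..u_p u_1..u_{j-1}} (x) f_{u_j}. *)
Definition cyc_grad (n : nat) (u : seq 'I_n) : seq (seq 'I_n * 'I_n) :=
  [seq (drop j.+1 u ++ take j u, tnth (in_tuple u) j) | j : 'I_(size u) <- enum 'I_(size u)].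

(* The degree-k part of the n-fold direct sum F(C^n)^n, i.e. [(C^n)^{(x)k}]^n,
   in coordinates w.r.t. the orthonormal basis (e_w)_{w in [n]^k} in each
   of the n summands: a vector is a function (i, w) |-> coefficient of e_w in
   the i-th summand. *)
Definition fockn (C : numClosedFieldType) (n k : nat) :=
  {ffun 'I_n * k.-tuple 'I_n -> C^o}.

(* Evaluation of a formal sum sum_t l_{w_t} (x) f_{i_t} at 1 (+) ... (+) 1:
   its i-th component is sum_{t : i_t = i} l_{w_t} 1 = sum_{t : i_t = i} e_{w_t}. *)
Definition eval_one (C : numClosedFieldType) (n k : nat)
    (x : seq (seq 'I_n * 'I_n)) : fockn C n k :=
  [ffun p => \sum_(t <- x) ((t.2 == p.1) && (t.1 == val p.2))%:R].

Definition dl_one (C : numClosedFieldType) (n k : nat) (u : k.+1.-tuple 'I_n)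
  : fockn C n k := eval_one C k (cyc_grad u).

Definition fdot (C : numClosedFieldType) (n k : nat) (x y : fockn C n k) : C :=
  \sum_p (x p : C) * (y p : C)^*.

Definition words (n m : nat) : seq (m.-tuple 'I_n) := enum {: m.-tuple 'I_n}.

Definition rotR (n m : nat) (u : m.-tuple 'I_n) : m.-tuple 'I_n :=
  [tuple of rotr 1 u].

Definition zact (n k : nat) (g : 'I_k.+1) (u : k.+1.-tuple 'I_n) :=
  iter g (@rotR n k.+1) u.

Definition orbit_of (n k : nat) (u : k.+1.-tuple 'I_n) : {set k.+1.-tuple 'I_n} :=
  [set zact g u | g : 'I_k.+1].

Definition stab (n k : nat) (u : k.+1.-tuple 'I_n) : {set 'I_k.+1} :=
  [set g : 'I_k.+1 | zact g u == u].

Definition Fvec (C : numClosedFieldType) (n k : nat) (u : k.+1.-tuple 'I_n)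
  : fockn C n k :=
  ((#|stab u|%:R * sqrtC (#|orbit_of u|%:R))^-1 : C) *: dl_one C u.

(* The subspace delta^l((C^l_<n>)_{k+1})[1 (+) ... (+) 1]: the span of the
   images of the monomials l_u, u in [n]^{k+1} *)
Definition Vk (C : numClosedFieldType) (n k : nat) : {vspace fockn C n k} :=
  <<[seq dl_one C u | u <- words n k.+1]>>%VS.

Definition Sk (C : numClosedFieldType) (n k : nat) : seq (fockn C n k) :=
  undup [seq Fvec C u | u <- words n k.+1].

(* Main.v *)
Require Import Defs.
From HB Require Import structures.
From mathcomp Require Import all_boot all_order all_algebra.
From mathcomp Require Import ring.
Import Order.TTheory GRing.Theory Num.Theory.
Local Open Scope ring_scope.
Set Implicit Arguments. Unset Strict Implicit.

Section Comb.
Variables (n k : nat).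
Local Notation T := (k.+1.-tuple 'I_n).

Lemma iter_rotR m (u : T) : (m <= k.+1)%N -> val (iter m (@rotR n k.+1) u) = rotr m u.
Proof.
elim: m => [|m IH] hm /=; first by rewrite /rotr subn0 rot_size.
rewrite IH ?(ltnW hm) //= /rotr !size_tuple.
have -> : (k.+1 - m = 1 + (k.+1 - m.+1))%N by rewrite add1n subnSK.
rewrite rotD; first last.
  by rewrite size_tuple add1n subnSK // leq_subr.
by have := rotK 1 (rot (k.+1 - m.+1) u); rewrite /rotr size_rot size_tuple.
Qed.

Lemma iter_rotR_period (u : T) : iter k.+1 (@rotR n k.+1) u = u.
Proof. by apply: val_inj; rewrite iter_rotR // /rotr size_tuple subnn rot0. Qed.

Lemma iter_rotR_mod m (u : T) : iter (m %% k.+1) (@rotR n k.+1) u = iter m (@rotR n k.+1) u.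
Proof.
by rewrite {2}(divn_eq m k.+1) iterD iterM (iter_fix _ (iter_rotR_period _)).
Qed.

Lemma zactD (g h : 'I_k.+1) (u : T) : zact (g + h) u = zact g (zact h u).
Proof. by rewrite /zact -iterD -[RHS]iter_rotR_mod. Qed.

Lemma zact0 (u : T) : zact 0 u = u.
Proof. by []. Qed.

Lemma zactK (g : 'I_k.+1) (u : T) : zact (- g) (zact g u) = u.
Proof. by rewrite -zactD addNr. Qed.

Lemma zactC (g h : 'I_k.+1) (u : T) : zact g (zact h u) = zact h (zact g u).
Proof. by rewrite -!zactD addrC. Qed.

Lemma zact_inj (g : 'I_k.+1) : injective (@zact n k g).
Proof. exact: can_inj (zactK g). Qed.

Lemma zactE (g : 'I_k.+1) (u : T) : val (zact g u) = rot (val (- g)) u.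
Proof.
rewrite /zact iter_rotR 1?ltnW // /rotr size_tuple /=.
case: g => [[|g] hg] /=; first by rewrite subn0 modnn rot0 -{1}(size_tuple u) rot_size.
by rewrite modn_small // subSS ltnS leq_subr.
Qed.

End Comb.

Section Orb.
Variables (n k : nat).
Local Notation T := (k.+1.-tuple 'I_n).

Definition cnt (u w : T) : nat := #|[set g : 'I_k.+1 | zact g u == w]|.

Lemma orbit_refl (u : T) : u \in orbit_of u.
Proof. by apply/imsetP; exists 0. Qed.

Lemma orbit_sub (u v : T) : v \in orbit_of u -> orbit_of v = orbit_of u.
Proof.
case/imsetP => h _ ->; apply/setP => w; apply/imsetP/imsetP => [[g _ ->]|[g _ ->]].
  by exists (g + h); rewrite ?zactD.
by exists (g - h); rewrite // -zactD subrK.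
Qed.

Lemma stab_sub (u v : T) : v \in orbit_of u -> stab v = stab u.
Proof.
case/imsetP => h _ ->; apply/setP => g; rewrite !inE zactC.
by rewrite (inj_eq (@zact_inj n k h)).
Qed.

Lemma orbit_meet (u v w : T) : w \in orbit_of u -> w \in orbit_of v -> v \in orbit_of u.
Proof.
case/imsetP => g _ ->; case/imsetP => h _ /(congr1 (zact (- h))).
rewrite zactK -zactD => <-; exact: imset_f.
Qed.

Lemma cnt_orbit (u w : T) : cnt u w = if w \in orbit_of u then #|stab u| else 0%N.
Proof.
case: ifP => [/imsetP[h _ ->]|wn].
  rewrite /cnt -(card_preimset _ (addIr h)); apply: eq_card => g.
  by rewrite !inE zactD zactC (inj_eq (@zact_inj n k h)).
apply/eqP; rewrite cards_eq0; apply/eqP/setP => g; rewrite !inE.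
apply/negP => /eqP e; move: wn; rewrite -e.
by have -> : zact g u \in orbit_of u by apply/imsetP; exists g.
Qed.

Lemma stab_gt0 (u : T) : (0 < #|stab u|)%N.
Proof. by apply/card_gt0P; exists 0; rewrite inE. Qed.

Lemma orbit_gt0 (u : T) : (0 < #|orbit_of u|)%N.
Proof. by apply/card_gt0P; exists u; rewrite orbit_refl. Qed.

Lemma cnt_sub (u v : T) : v \in orbit_of u -> cnt v =1 cnt u.
Proof. by move=> vu w; rewrite !cnt_orbit (orbit_sub vu) (stab_sub vu). Qed.

End Orb.

Section DL.
Variables (C : numClosedFieldType) (n k : nat).
Local Notation T := (k.+1.-tuple 'I_n).

Definition ct (p : 'I_n * k.-tuple 'I_n) : T := cons_tuple p.1 p.2.

Lemma cntE (u x : T) : cnt u x = (\sum_(0 <= j < k.+1) (rot j u == x))%N.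
Proof.
rewrite big_mkord /cnt -sum1_card big_mkcond /=.
rewrite (reindex_inj (@oppr_inj _)) /=; apply: eq_bigr => g _.
by rewrite inE -val_eqE zactE opprK; case: (_ == _).
Qed.

Lemma dl_oneE (u : T) p : dl_one C u p = (cnt u (ct p))%:R.
Proof.
rewrite /dl_one /eval_one ffunE /cyc_grad big_map big_enum /= cntE -natr_sum.
congr (_%:R).
pose x0 := tnth u ord0.
transitivity (\sum_(j < size u) (rot j u == ct p : nat))%N; last first.
  by rewrite -(big_mkord xpredT (fun j => (rot j u == ct p : nat))) size_tuple.
apply: eq_big => // j _.
rewrite /rot [drop j u](drop_nth x0) ?ltn_ord // (tnth_nth x0) /= /ct /=.
by [].
Qed.

End DL.

Section Dot.
Variables (C : numClosedFieldType) (n k : nat).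
Local Notation T := (k.+1.-tuple 'I_n).

Definition cf (u : T) : C := (#|stab u|%:R * sqrtC (#|orbit_of u|%:R))^-1.

Lemma cf_ge0 u : 0 <= cf u.
Proof. by rewrite /cf invr_ge0 mulr_ge0 ?ler0n ?sqrtC_ge0. Qed.

Lemma cf_neq0 u : cf u != 0.
Proof.
rewrite /cf invr_eq0 mulf_neq0 // ?pnatr_eq0 -?lt0n ?stab_gt0 //.
by rewrite sqrtC_eq0 pnatr_eq0 -lt0n orbit_gt0.
Qed.

Lemma FvecE (u : T) p : Fvec C u p = cf u * (cnt u (ct p))%:R.
Proof. by rewrite /Fvec ffunE dl_oneE. Qed.

Lemma sum_ct (F : T -> C) : \sum_p F (ct p) = \sum_x F x.
Proof.
symmetry; rewrite (reindex (@ct n k)) //; exists (fun x : T => (thead x, [tuple of behead x])).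
  by move=> [a w] _; congr pair; apply: val_inj.
by move=> x _; rewrite /ct /=; apply: val_inj; rewrite /= [in RHS](tuple_eta x).
Qed.

Lemma fdot_cnt (u v : T) :
  fdot (Fvec C u) (Fvec C v) = cf u * cf v * (\sum_x cnt u x * cnt v x)%:R.
Proof.
rewrite /fdot natr_sum mulr_sumr -sum_ct; apply: eq_bigr => p _.
rewrite !FvecE rmorphM /= conjC_nat (geC0_conj (cf_ge0 v)) natrM; ring.
Qed.

Lemma sum_cnt (u v : T) : (\sum_x cnt u x * cnt v x =
  if v \in orbit_of u then #|orbit_of u| * (#|stab u| * #|stab u|) else 0)%N.
Proof.
case: ifP => vu.
  rewrite -sum_nat_const [RHS]big_mkcond; apply: eq_bigr => x _.
  by rewrite (cnt_sub vu) !cnt_orbit; case: ifP.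
apply: big1 => x _; rewrite !cnt_orbit.
case: ifP => // xu; case: ifP => [xv|]; last by rewrite muln0.
by rewrite (orbit_meet xu xv) in vu.
Qed.

Lemma fdotF (u v : T) : fdot (Fvec C u) (Fvec C v) = (v \in orbit_of u)%:R.
Proof.
rewrite fdot_cnt sum_cnt; case: ifP => vu; last by rewrite mulr0.
have nz := cf_neq0 u; move: nz.
rewrite /cf (stab_sub vu) (orbit_sub vu) natrM natrM -invfM invr_eq0.
set s := (#|stab u|%:R : C); set o := (#|orbit_of u|%:R : C) => nz.
have -> : o * (s * s) = s * sqrtC o * (s * sqrtC o) by rewrite -[o in LHS]sqrtCK; ring.
by apply: mulVf; rewrite mulf_neq0.
Qed.

End Dot.

Section Main.
Variables (C : numClosedFieldType) (n k : nat).
Local Notation T := (k.+1.-tuple 'I_n).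

Lemma Fvec_wd (u v : T) : v \in orbit_of u -> Fvec C v = Fvec C u.
Proof.
move=> vu; apply/ffunP => p; rewrite !FvecE (cnt_sub vu).
by rewrite /cf (stab_sub vu) (orbit_sub vu).
Qed.

Lemma Fvec_eq (u v : T) : (Fvec C u == Fvec C v) = (v \in orbit_of u).
Proof.
apply/eqP/idP => [e|vu]; last by rewrite (Fvec_wd vu).
have := fdotF C u v; rewrite -e fdotF orbit_refl => /eqP.
by case: (v \in orbit_of u) => //=; rewrite oner_eq0.
Qed.

Lemma fdot_Sk x y : x \in Sk C n k -> y \in Sk C n k -> fdot x y = (x == y)%:R.
Proof.
rewrite !mem_undup => /mapP[u _ ->] /mapP[v _ ->].
by rewrite fdotF Fvec_eq.
Qed.

Lemma fdot_suml m (a : 'I_m -> C) (X : 'I_m -> fockn C n k) y :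
  fdot (\sum_i a i *: X i) y = \sum_i a i * fdot (X i) y.
Proof.
rewrite /fdot; under eq_bigr do rewrite sum_ffunE mulr_suml.
rewrite exchange_big /=; apply: eq_bigr => i _; rewrite mulr_sumr.
by apply: eq_bigr => p _; rewrite ffunE mulrA.
Qed.

Lemma Sk_free : free (Sk C n k).
Proof.
suff : free (in_tuple (Sk C n k)) by [].
apply/freeP => a H i.
have := congr1 (fun x => fdot x (Sk C n k)`_i) H.
rewrite fdot_suml.
have -> : fdot 0 (Sk C n k)`_i = 0 by rewrite /fdot big1 // => p _; rewrite ffunE mul0r.
rewrite (bigD1 i) //= big1 ?addr0.
  by rewrite fdot_Sk ?mem_nth // eqxx mulr1.
move=> j ji; rewrite fdot_Sk ?mem_nth //.
by rewrite nth_uniq ?undup_uniq // val_eqE (negPf ji) mulr0.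
Qed.

Lemma Sk_span : (<<Sk C n k>> = Vk C n k)%VS.
Proof.
apply/eqP; rewrite eqEsubv; apply/andP; split; apply/span_subvP => x.
  rewrite mem_undup => /mapP[u _ ->]; apply: memvZ; apply: memv_span.
  by apply: map_f; rewrite mem_enum.
move=> /mapP[u _ ->].
have -> : dl_one C u = (cf C u)^-1 *: Fvec C u.
  by rewrite /Fvec -/(cf C u) scalerA mulVf ?scale1r // cf_neq0.
apply: memvZ; apply: memv_span; rewrite mem_undup.
by apply: map_f; rewrite mem_enum.
Qed.

End Main.

Unset Implicit Arguments.
Set Strict Implicit.

Theorem theorem3p1 (C : numClosedFieldType) (n : nat) (hn : (0 < n)%N) (k : nat) :
  (* well-definedness: F([u]) does not depend on the representative *)
  (forall u v : k.+1.-tuple 'I_n, v \in orbit_of u -> Fvec C v = Fvec C u)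
  (* orthonormality, indexed by orbits *)
  /\ (forall u v : k.+1.-tuple 'I_n,
        fdot (Fvec C u) (Fvec C v) = (v \in orbit_of u)%:R)
  (* S_k is a basis of the subspace *)
  /\ basis_of (Vk C n k) (Sk C n k).
Proof.
split; first exact: Fvec_wd.
split; first exact: fdotF.
by rewrite /basis_of Sk_span eqxx Sk_free.
Qed.
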